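(* Let $I\subseteq R$ be a good ideal and $a_1,\dots,a_n\in\mathbb N$, and put $l=a_1+\dots+a_n+1$. Then $I_{a_1,\dots,a_n}=I^l:\langle\mu_1^{a_1}\cdots\mu_n^{a_n}\rangle$.
   Context: Let $\mathbb K$ be a field, $R=\mathbb K[x_1,\dots,x_n]$, $\mathfrak m=\langle x_1,\dots,x_n\rangle$, $\mathbb N=\{0,1,2,\dots\}$. A monomial $x_1^{\alpha_1}\cdots x_n^{\alpha_n}$ is identified with the point $(\alpha_1,\dots,\alpha_n)\in\mathbb N^n$. For a monomial ideal $I$, $G(I)$ denotes its (unique) minimal monomial generating set. If $I$ is an $\mathfrak m$-primary monomial ideal, then for each $i$ there is a unique $d_i\ge1$ with $x_i^{d_i}\in G(I)$; write $\mu_i=x_i^{d_i}$. For $(a_1,\dots,a_n)\in\mathbb N^n$ the box associated to $I$ is $B_{a_1,\dots,a_n}=([a_1d_1,(a_1+1)d_1]\times\cdots\times[a_nd_n,(a_n+1)d_n])\cap\mathbb N^n$; a monomial belongs to a box if its exponent vector does. An $\mathfrak m$-primary monomial ideal $I$ is called good if for every integer $l\ge1$, every element of $G(I^l)$ belongs to some box $B_{a_1,\dots,a_n}$ with $a_1+\dots+a_n=l-1$. For a good ideal $I$ and $a=(a_1,\dots,a_n)\in\mathbb N^n$, with $l=a_1+\dots+a_n+1$, define $I_{a_1,\dots,a_n}=\left\langle \frac{m}{\mu_1^{a_1}\cdots\mu_n^{a_n}} : m\in B_{a_1,\dots,a_n}\cap G(I^l)\right\rangle$ (every monomial in $B_{a_1,\dots,a_n}$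 is divisible by $\mu_1^{a_1}\cdots\mu_n^{a_n}$). *)

(* Defs.v *)
From mathcomp Require Import all_boot.
Set Implicit Arguments. Unset Strict Implicit. Unset Printing Implicit Defensive.

(* A monomial x_1^e_1 ... x_n^e_n is its exponent vector e : 'I_n -> nat. *)
Definition mon (n : nat) := {ffun 'I_n -> nat}.

Definition mon1 (n : nat) : mon n := [ffun _ => 0].
Definition mmul n (u v : mon n) : mon n := [ffun i => u i + v i].
(* exact quotient u / v (only used when v divides u) *)
Definition mdiv n (u v : mon n) : mon n := [ffun i => u i - v i].
Definition mdvd n (v u : mon n) : bool := [forall i, v i <= u i].
Definition xpow n (i : 'I_n) (k : nat) : mon n := [ffun j => if j == i then k else 0].
(* prod_i mu_i^{a_i} with mu_i = x_i^{d_i} *)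
Definition mupow n (d a : mon n) : mon n := [ffun i => a i * d i].

(* A monomial ideal is given by a finite list S of monomial generators;
   its monomials are those divisible by some generator. *)
Definition in_mideal n (S : seq (mon n)) (m : mon n) : bool :=
  has (fun g => mdvd g m) S.

Fixpoint gpow n (S : seq (mon n)) (l : nat) : seq (mon n) :=
  match l with
  | 0 => [:: mon1 n]
  | l'.+1 => [seq mmul g h | g <- S, h <- gpow S l']
  end.

Definition mingens n (S : seq (mon n)) : seq (mon n) :=
  [seq m <- undup S | ~~ has (fun s => (s != m) && mdvd s m) S].

Definition in_box n (d a m : mon n) : bool :=
  [forall i, (a i * d i <= m i) && (m i <= (a i).+1 * d i)].

Definition deg n (a : mon n) : nat := \sum_(i < n) a i.

(* d_i is the (unique) exponent with x_i^{d_i} in G(I), d_i >= 1;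
   existence of such d for all i is exactly m-primariness. *)
Definition pure_powers n (S : seq (mon n)) (d : mon n) : Prop :=
  forall i : 'I_n, 0 < d i /\ xpow i (d i) \in mingens S.

Definition good n (S : seq (mon n)) (d : mon n) : Prop :=
  pure_powers S d /\
  forall l : nat, 1 <= l ->
    forall m, m \in mingens (gpow S l) ->
      exists a : mon n, deg a = l.-1 /\ in_box d a m.

Definition Ia_gens n (S : seq (mon n)) (d a : mon n) : seq (mon n) :=
  [seq mdiv m (mupow d a) | m <- mingens (gpow S (deg a).+1) & in_box d a m].

(* Main.v *)
Require Import Defs.
From mathcomp Require Import all_boot.
From mathcomp Require Import zify.
Set Implicit Arguments. Unset Strict Implicit. Unset Printing Implicit Defensive.

Section Aux.
Variable n : nat.
Implicit Types (u v s : mon n) (T : seq (mon n)).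

Lemma mdvdP v u : reflect (forall i, v i <= u i) (mdvd v u).
Proof. exact: forallP. Qed.

Lemma sum_le_eq (F G : 'I_n -> nat) :
  (forall i, F i <= G i) -> \sum_i G i <= \sum_i F i -> forall i, F i = G i.
Proof.
move=> H Hs i; apply/eqP; rewrite eqn_leq H /= leqNgt; apply/negP => Hlt.
have : \sum_i F i < \sum_i G i.
  rewrite (bigD1 i) //= [X in _ < X](bigD1 i) //= -addSn.
  by apply: leq_add => //; apply: leq_sum => j _; exact: H.
by rewrite ltnNge Hs.
Qed.

Lemma sum_ind (j : 'I_n) : \sum_(x < n) ((x == j) : nat) = 1.
Proof. by rewrite (bigD1 j) //= eqxx big1 // => x /negbTE ->. Qed.

Definition msz u := \sum_i u i.

Lemma mem_mingens T (t : mon n) :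
  (t \in mingens T) = (t \in T) && ~~ has (fun s => (s != t) && mdvd s t) T.
Proof. by rewrite /mingens mem_filter mem_undup andbC. Qed.

Lemma exists_min T (t : mon n) : t \in T -> exists2 p, p \in mingens T & mdvd p t.
Proof.
have [k Hk] := ubnP (msz t); elim: k t Hk => // k IH t Hk Ht.
case: (boolP (has (fun s => (s != t) && mdvd s t) T)) => [/hasP [s Hs /andP [Hne Hdv]] | Hn].
  have Hlt : msz s < msz t.
    rewrite ltnNge; apply/negP => Hle; move/eqP: Hne; apply; apply/ffunP => i.
    apply: (sum_le_eq (F := fun i => s i) (G := fun i => t i)) => // j.
    exact: (mdvdP _ _ Hdv).
  have [p Hp Hps] := IH s (leq_trans Hlt Hk) Hs.
  exists p => //; apply/mdvdP => i; apply: leq_trans (mdvdP _ _ Hps i) _.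
  exact: (mdvdP _ _ Hdv).
exists t; first by rewrite mem_mingens Ht.
by apply/mdvdP.
Qed.

Lemma mingens_sub T (t : mon n) : t \in mingens T -> t \in T.
Proof. by rewrite mem_mingens => /andP []. Qed.

Variable d : mon n.
Definition cf (i : 'I_n) := \prod_(j | j != i) d j.
Definition Dd := \prod_j d j.
Definition W (x : mon n) := \sum_i x i * cf i.

Lemma dcf i : d i * cf i = Dd.
Proof. by rewrite /Dd (bigD1 i). Qed.

Lemma W_mul u v : W (mmul u v) = W u + W v.
Proof. by rewrite /W -big_split /=; apply: eq_bigr => i _; rewrite ffunE mulnDl. Qed.

Lemma W_mupow c : W (mupow d c) = Dd * deg c.
Proof.
rewrite /W /deg big_distrr; apply: eq_bigr => i _.
by rewrite ffunE -mulnA dcf mulnC.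
Qed.

Lemma W_le u v : mdvd u v -> W u <= W v.
Proof. move/mdvdP => H; apply: leq_sum => i _; by rewrite leq_mul2r H orbT. Qed.

Definition mpowm (g : mon n) (l : nat) : mon n := [ffun i => l * g i].

Lemma W_mpowm g l : W (mpowm g l) = l * W g.
Proof. by rewrite /W big_distrr; apply: eq_bigr => i _; rewrite ffunE -mulnA. Qed.

Variable S : seq (mon n).

Lemma mpowm_gpow g l : g \in S -> mpowm g l \in gpow S l.
Proof.
move=> Hg; elim: l => [|l IH] /=.
  rewrite mem_seq1; apply/eqP/ffunP => i; by rewrite !ffunE.
apply/allpairsPdep; exists g, (mpowm g l); split => //.
by apply/ffunP => i; rewrite !ffunE mulSn.
Qed.

Lemma gpow_W l s : (forall g, g \in S -> Dd <= W g) -> s \in gpow S l -> l * Dd <= W s.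
Proof.
move=> HS; elim: l s => [|l IH] s /=; first by rewrite mul0n.
move/allpairsPdep => [g [h [Hg Hh ->]]].
by rewrite W_mul mulSn; apply: leq_add; [exact: HS | exact: IH].
Qed.

Lemma mupow_gpow : (forall i, xpow i (d i) \in S) ->
  forall k c, deg c = k -> mupow d c \in gpow S k.
Proof.
move=> Hx; elim => [|k IH] c Hc /=.
  rewrite mem_seq1; apply/eqP/ffunP => i; rewrite !ffunE.
  move/eqP: Hc; rewrite /deg sum_nat_eq0 => /forallP /(_ i) /eqP ->.
  by rewrite mul0n.
have [j Hj] : exists j, 0 < c j.
  case: (boolP [exists j, 0 < c j]) => [/existsP [j Hj] | /existsPn H]; first by exists j.
  move: Hc; rewrite /deg big1 // => i _; move: (H i); by rewrite lt0n negbK => /eqP.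
pose c' : mon n := [ffun t => c t - (t == j)].
have Hcc : forall t : 'I_n, c t = c' t + (t == j).
  move=> t; rewrite ffunE; case: eqP => [-> | _]; [by rewrite subnK | by rewrite !subn0 addn0].
have Hdeg : deg c' = k.
  apply/eqP; rewrite -eqSS; apply/eqP; rewrite -Hc /deg (eq_bigr _ (fun t _ => Hcc t)).
  by rewrite big_split /= sum_ind addn1.
apply/allpairsPdep; exists (xpow j (d j)), (mupow d c'); split => //; first exact: IH.
apply/ffunP => t; rewrite !ffunE Hcc; case: eqP => [-> | _]; first by rewrite addnK addn1 mulSn.
by rewrite !addn0 subn0 add0n.
Qed.

End Aux.

Lemma in_boxP n (d a m : mon n) :
  reflect (forall i, (a i * d i <= m i) && (m i <= (a i).+1 * d i)) (in_box d a m).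
Proof. exact: forallP. Qed.

Theorem mainTheorem4 (n : nat) (S : seq (mon n)) (d : mon n) (a : mon n) :
  good S d ->
  forall m : mon n,
    in_mideal (Ia_gens S d a) m =
    in_mideal (gpow S (deg a).+1) (mmul m (mupow d a)).
Proof.
move=> [Hpp Hgood] m.
have dpos : forall i, 0 < d i by move=> i; case: (Hpp i).
have HxS : forall i, xpow i (d i) \in S by move=> i; case: (Hpp i) => _ /mingens_sub.
have Dpos : 0 < Dd d by apply: prodn_gt0.
have cfpos : forall i, 0 < cf d i by move=> i; apply: prodn_gt0.
have HW : forall g, g \in S -> Dd d <= W d g.
  move=> g Hg; rewrite leqNgt; apply/negP => Hlt.
  set l := (Dd d).*2.
  have [p Hp Hpg] := exists_min (mpowm_gpow l Hg).
  have Hl : 1 <= l by rewrite /l -addnn; lia.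
  have [b [Hb Hbox]] := Hgood l Hl p Hp.
  have Hbp : mdvd (mupow d b) p.
    by apply/mdvdP => i; rewrite ffunE; case/andP: (in_boxP _ _ _ Hbox i).
  have := leq_trans (W_le d Hbp) (W_le d Hpg).
  rewrite W_mupow W_mpowm Hb /l => H.
  have : (Dd d).*2 * W d g <= (Dd d).*2 * (Dd d).-1.
    by rewrite leq_mul2l; apply/orP; right; lia.
  rewrite -!addnn in H *; nia.
apply/hasP/hasP.
- move=> [g /mapP [p]]; rewrite mem_filter => /andP [Hbox Hp] -> Hdv.
  exists p; first exact: mingens_sub Hp.
  apply/mdvdP => i; move: (mdvdP _ _ Hdv i) (in_boxP _ _ _ Hbox i); rewrite !ffunE.
  move=> H1 /andP [H2 _]; lia.
move=> [g Hg Hdv].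
have [p Hp Hpg] := exists_min Hg.
have Hpm : forall i, p i <= m i + a i * d i.
  move=> i; move: (mdvdP _ _ Hpg i) (mdvdP _ _ Hdv i); rewrite !ffunE; exact: leq_trans.
have [b [Hb Hbox]] := Hgood (deg a).+1 isT p Hp.
case: (boolP (in_box d a p)) => Hpa.
  exists (mdiv p (mupow d a)).
    apply/mapP; exists p => //; by rewrite mem_filter Hpa.
  apply/mdvdP => i; rewrite !ffunE; by rewrite leq_subLR addnC Hpm.
have [i Hi] : exists i, a i < b i.
  case: (boolP [forall i, b i <= a i]) => [/forallP H | /forallPn [i Hi]]; last first.
    by exists i; rewrite ltnNge.
  have Heq := sum_le_eq (F := fun i => b i) (G := fun i => a i) H.
  have Eba : b = a.
    apply/ffunP => j; apply: Heq; by rewrite /deg in Hb; rewrite Hb.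
  by rewrite -Eba Hbox in Hpa.
pose a' : mon n := [ffun j => a j + (j == i)].
have Ha' : deg a' = (deg a).+1.
  rewrite /deg (eq_bigr (fun j => a j + (j == i))) => [|j _]; last by rewrite ffunE.
  by rewrite big_split /= sum_ind addn1.
have HP : mupow d a' \in mingens (gpow S (deg a).+1).
  rewrite mem_mingens (mupow_gpow HxS Ha') andTb; apply/hasPn => s Hs; apply/negP => /andP [Hne Hsd].
  have Hws := gpow_W HW Hs.
  rewrite -Ha' mulnC -W_mupow in Hws.
  move/eqP: Hne; apply; apply/ffunP => j.
  have Hle : forall t, s t * cf d t <= mupow d a' t * cf d t.
    by move=> t; rewrite leq_mul2r (mdvdP _ _ Hsd t) orbT.
  have := sum_le_eq (F := fun t => s t * cf d t) (G := fun t => mupow d a' t * cf d t) Hle Hws j.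
  by move/eqP; rewrite eqn_mul2r (negbTE (lt0n_neq0 (cfpos j))) /= => /eqP.
exists (mdiv (mupow d a') (mupow d a)).
  apply/mapP; exists (mupow d a') => //; rewrite mem_filter HP andbT.
  apply/in_boxP => j; rewrite /a' !ffunE; case: (j == i) => /=.
    by rewrite addn1 mulSn leq_addl leqnn.
  by rewrite addn0 mulSn leq_addl leqnn.
apply/mdvdP => j; rewrite /a' !ffunE; case E: (j == i) => /=; last by rewrite addn0 subnn.
  move/eqP: E => ->.
  move: (Hpm i) (in_boxP _ _ _ Hbox i) => H1 /andP [H2 _].
  have : (a i).+1 * d i <= b i * d i by rewrite leq_mul2r Hi orbT.
  move=> H3; rewrite addn1 mulSn addnK.
  by have := leq_trans H3 (leq_trans H2 H1); rewrite mulSn leq_add2r.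
Qed.
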